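(* In the binary setting with $R_p=0$ and $0<\beta<1$, the function $U(s,\cdot)$ restricted to $[0,Q-d_l]$ has at most one local maximum point. Writing $$G(\pi)=\frac{\lambda(\kappa-\pi)^\beta w(p)}{\pi^\beta w(1-p)}\Big(1+\frac{\kappa(d_h-Q)}{(\kappa-\pi)(Q-d_l)}\Big)^{\beta-1},$$ if $G(\pi)<1$ then the maximum of $U(s,\cdot)$ over $[0,Q-d_l]$ is attained at $q_s=Q-d_l$, and if $G(\pi)\ge1$ it is attained at the point $$q_s=\frac{\frac{\kappa}{\kappa-\pi}(d_h-Q)}{\Big(\frac{w(1-p)\pi^\beta}{w(p)\lambda(\kappa-\pi)^\beta}\Big)^{\frac{1}{\beta-1}}-1}\in(0,Q-d_l].$$
   Context: Binary setting: $\kappa>0$, $0<d_l<Q<d_h$, $0<p<1$; the demand equals $d_h$ with probability $p$ and $d_l$ with probability $1-p$. $L(y)=0$ if $y\ge0$, $L(y)=\kappa y$ if $y<0$. Value function $v(x)=x^\beta$ for $x\ge0$, $v(x)=-\lambda(-x)^\beta$ for $x<0$, with $\lambda\ge1$. Weighting $w(q)=\exp(-(-\ln q)^\mu)$, $0<\mu\le1$. Price $\pi=\pi_b^{\max}\in(0,\kappa)$. Seller's utility $U(s,q_s)=w(1-p)\,v\big(\pi q_s+L(Q-q_s-d_l)-R_p\big)+w(p)\,v\big(\pi q_s+L(Q-q_s-d_h)-R_p\big)$ for $q_s\ge0$. *)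

(* Defs.v *)
From Stdlib Require Import Reals.
Open Scope R_scope.

(* x^b for x >= 0 (with 0^b = 0, b > 0); Rpower alone gives 0^b = 1. *)
Definition rpow (x b : R) : R := if Rle_dec x 0 then 0 else Rpower x b.

Definition Lfun (kappa y : R) : R := if Rle_dec 0 y then 0 else kappa * y.

Definition vfun (beta lambda x : R) : R :=
  if Rle_dec 0 x then rpow x beta else - lambda * rpow (- x) beta.

Definition wfun (mu q : R) : R := exp (- Rpower (- ln q) mu).

Definition Ufun (kappa dl dh Q p beta lambda mu pi Rp qs : R) : R :=
  wfun mu (1 - p) * vfun beta lambda (pi * qs + Lfun kappa (Q - qs - dl) - Rp)
  + wfun mu p * vfun beta lambda (pi * qs + Lfun kappa (Q - qs - dh) - Rp).

Definition local_max_on (f : R -> R) (a b x : R) : Prop :=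
  a <= x <= b /\
  exists eps, 0 < eps /\
    forall y, a <= y <= b -> Rabs (y - x) < eps -> f y <= f x.

Definition max_on_at (f : R -> R) (a b x : R) : Prop :=
  a <= x <= b /\ forall y, a <= y <= b -> f y <= f x.

(* Main.v *)
Require Import Defs.
From Stdlib Require Import Reals Lra.
From Coquelicot Require Import Coquelicot.
Open Scope R_scope.

Lemma Rpower_base_lt x y z : 0 < x -> x < y -> 0 < z -> Rpower x z < Rpower y z.
Proof.
intros Hx Hxy Hz. unfold Rpower. apply exp_increasing.
apply Rmult_lt_compat_l; auto. apply ln_increasing; lra.
Qed.

Lemma rpow_cont0 b : 0 < b -> continuity_pt (fun x => rpow x b) 0.
Proof.
intros Hb eps Heps.
exists (Rpower eps (1/b)). split. { unfold Rpower; apply exp_pos. }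
intros x [_ Hx]. simpl in *. unfold R_dist in *.
unfold rpow at 2. destruct (Rle_dec 0 0); [|lra].
unfold rpow. destruct (Rle_dec x 0).
- rewrite Rminus_0_r, Rabs_R0; lra.
- idtac.
  rewrite !Rminus_0_r in *. rewrite Rabs_right by (unfold Rpower; left; apply exp_pos).
  rewrite Rabs_right in Hx by lra.
  eapply Rlt_le_trans. apply Rpower_base_lt; eauto; lra.
  rewrite Rpower_mult. replace (1/b*b) with 1 by (field; lra).
  rewrite Rpower_1; lra.
Qed.

Lemma mvt_strict f df x y : x < y ->
  (forall t, x < t < y -> derivable_pt_lim f t (df t)) ->
  (forall t, x <= t <= y -> continuity_pt f t) ->
  exists c, x < c < y /\ f y - f x = df c * (y - x).
Proof.
intros Hxy Hd Hc.
destruct (MVT f id x y (fun c P => exist _ (df c) (Hd c P))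
  (fun c _ => derivable_pt_id c) Hxy Hc
  (fun c _ => derivable_continuous_pt _ _ (derivable_pt_id c))) as [c [P HP]].
exists c. split; auto. simpl in HP. rewrite derive_pt_id in HP. unfold id in HP.
lra.
Qed.

Lemma unimodal (f : R -> R) M m : 0 < M <= m ->
  (forall x y, 0 <= x < y -> y <= M -> f x < f y) ->
  (forall x y, M <= x < y -> y <= m -> f y < f x) ->
  max_on_at f 0 m M /\ (forall x, local_max_on f 0 m x -> x = M).
Proof.
intros HM Hi Hd. split.
- split; [lra|]. intros y Hy.
  destruct (Rtotal_order y M) as [H|[H|H]].
  + left; apply Hi; lra.
  + subst; lra.
  + left; apply Hd; lra.
- intros x [Hx [e [He Hl]]].
  destruct (Rtotal_order x M) as [H|[H|H]]; auto.
  + set (y := Rmin (x + e/2) M).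
    assert (x < y <= M) by (unfold y; apply Rmin_case_strong; intros; lra).
    assert (Rabs (y - x) < e).
    { rewrite Rabs_right by lra. unfold y; apply Rmin_case_strong; intros; lra. }
    specialize (Hl y ltac:(lra) H1). specialize (Hi x y ltac:(lra) ltac:(lra)). lra.
  + set (y := Rmax (x - e/2) M).
    assert (M <= y < x) by (unfold y; apply Rmax_case_strong; intros; lra).
    assert (Rabs (y - x) < e).
    { rewrite Rabs_left by lra. unfold y; apply Rmax_case_strong; intros; lra. }
    specialize (Hl y ltac:(lra) H1). specialize (Hd y x ltac:(lra) ltac:(lra)). lra.
Qed.

Definition gf (a b c be q : R) := a * rpow q be - b * Rpower (q + c) be.
Definition dgf (a b c be t : R) :=
  be * (a * Rpower t (be - 1) - b * Rpower (t + c) (be - 1)).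

Lemma gf_deriv a b c be t : 0 < c -> 0 < t ->
  derivable_pt_lim (gf a b c be) t (dgf a b c be t).
Proof.
intros Hc Ht.
apply (proj1 (is_derive_Reals _ _ _)).
apply (is_derive_ext_loc (fun q => a * Rpower q be - b * Rpower (q + c) be)).
{ exists (mkposreal t Ht). intros q Hq. unfold gf, rpow.
  destruct (Rle_dec q 0); [|reflexivity].
  exfalso. unfold ball in Hq; simpl in Hq. unfold AbsRing_ball, abs, minus, plus, opp in Hq.
  simpl in Hq. apply Rabs_def2 in Hq. lra. }
apply (proj2 (is_derive_Reals _ _ _)).
unfold dgf.
replace (be * (a * Rpower t (be - 1) - b * Rpower (t + c) (be - 1))) with
  (a * (be * Rpower t (be - 1)) - b * ((be * Rpower (t + c) (be - 1)) * 1)) by ring.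
apply derivable_pt_lim_minus.
- apply derivable_pt_lim_scal. apply derivable_pt_lim_power; auto.
- apply derivable_pt_lim_scal.
  apply (derivable_pt_lim_comp (fun q => q + c) (fun q => Rpower q be)).
  + replace 1 with (1 + 0) by ring. apply derivable_pt_lim_plus.
    apply derivable_pt_lim_id. apply derivable_pt_lim_const.
  + apply derivable_pt_lim_power; lra.
Qed.

Lemma gf_cont a b c be t : 0 < c -> 0 < be -> 0 <= t -> continuity_pt (gf a b c be) t.
Proof.
intros Hc Hb Ht. destruct Ht as [Ht|Ht].
- apply derivable_continuous_pt. exists (dgf a b c be t). apply gf_deriv; auto.
- subst t. unfold gf.
  apply continuity_pt_minus.
  + apply continuity_pt_scal. apply rpow_cont0; auto.
  + apply continuity_pt_scal.
    apply (continuity_pt_comp (fun q => q + c) (fun q => Rpower q be)).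
    * apply continuity_pt_plus. apply derivable_continuous_pt, derivable_pt_id.
      apply continuity_pt_const. intros u v; reflexivity.
    * apply derivable_continuous_pt. exists (be * Rpower (0 + c) (be - 1)).
      apply derivable_pt_lim_power; lra.
Qed.

Lemma dgf_sign a b c be t : 0 < a -> 0 < b -> 0 < c -> 0 < be < 1 -> 0 < t ->
  let l := 1 / (be - 1) * ln (a / b) in
  (l < ln (1 + c / t) -> 0 < dgf a b c be t) /\
  (ln (1 + c / t) < l -> dgf a b c be t < 0).
Proof.
intros Ha Hb Hc Hbe Ht l.
assert (E : ln (1 + c / t) = ln (t + c) - ln t).
{ replace (1 + c / t) with ((t + c) / t) by (field; lra).
  rewrite ln_div by lra. ring. }
assert (El : (be - 1) * l = ln a - ln b).
{ unfold l. rewrite ln_div by lra. field. lra. }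
assert (Ea : a * Rpower t (be - 1) = exp (ln a + (be - 1) * ln t)).
{ rewrite exp_plus, exp_ln by lra. reflexivity. }
assert (Eb : b * Rpower (t + c) (be - 1) = exp (ln b + (be - 1) * ln (t + c))).
{ rewrite exp_plus, exp_ln by lra. reflexivity. }
unfold dgf. rewrite Ea, Eb. rewrite E. split; intros H.
- apply Rmult_lt_0_compat; [lra|]. apply Rlt_Rminus. apply exp_increasing.
  assert ((be - 1) * (ln (t + c) - ln t - l) < 0).
  { apply Rmult_neg_pos; lra. }
  nra.
- assert (0 < exp (ln b + (be - 1) * ln (t + c)) - exp (ln a + (be - 1) * ln t)).
  { apply Rlt_Rminus. apply exp_increasing.
    assert (0 < (be - 1) * (ln (t + c) - ln t - l)).
    { apply Rmult_neg_neg; lra. }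
    nra. }
  nra.
Qed.

Lemma gf_incr a b c be M x y : 0 < c -> 0 < be ->
  (forall t, 0 < t < M -> 0 < dgf a b c be t) -> 0 <= x < y -> y <= M ->
  gf a b c be x < gf a b c be y.
Proof.
intros Hc Hbe Hd Hxy HyM.
destruct (mvt_strict (gf a b c be) (dgf a b c be) x y) as [t [Ht E]]; try lra.
- intros t Ht; apply gf_deriv; lra.
- intros t Ht; apply gf_cont; lra.
- specialize (Hd t ltac:(lra)). assert (0 < dgf a b c be t * (y - x)) by (apply Rmult_lt_0_compat; lra). lra.
Qed.

Lemma gf_decr a b c be M N x y : 0 < c -> 0 < be -> 0 <= M ->
  (forall t, M < t < N -> dgf a b c be t < 0) -> M <= x < y -> y <= N ->
  gf a b c be y < gf a b c be x.
Proof.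
intros Hc Hbe HM Hd Hxy HyM.
destruct (mvt_strict (gf a b c be) (dgf a b c be) x y) as [t [Ht E]]; try lra.
- intros t Ht; apply gf_deriv; lra.
- intros t Ht; apply gf_cont; lra.
- specialize (Hd t ltac:(lra)). assert (dgf a b c be t * (y - x) < 0) by (apply Rmult_neg_pos; lra). lra.
Qed.

Lemma s_decr c t1 t2 : 0 < c -> 0 < t1 < t2 -> ln (1 + c / t2) < ln (1 + c / t1).
Proof.
intros Hc Ht. apply ln_increasing.
- assert (0 < c / t2) by (apply Rdiv_lt_0_compat; lra). lra.
- apply Rplus_lt_compat_l. unfold Rdiv. apply Rmult_lt_compat_l; auto.
  apply Rinv_lt_contravar; nra.
Qed.

Theorem mainTheorem5 (kappa dl dh Q p beta lambda mu pi : R)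
  (Hkappa : 0 < kappa) (Hdl : 0 < dl) (HdlQ : dl < Q) (HQdh : Q < dh)
  (Hp : 0 < p < 1) (Hlambda : 1 <= lambda) (Hmu : 0 < mu <= 1)
  (Hpi : 0 < pi < kappa) (Hbeta : 0 < beta < 1) :
  let U := Ufun kappa dl dh Q p beta lambda mu pi 0 in
  let G := lambda * Rpower (kappa - pi) beta * wfun mu p
             / (Rpower pi beta * wfun mu (1 - p))
           * Rpower (1 + kappa * (dh - Q) / ((kappa - pi) * (Q - dl))) (beta - 1) in
  let qstar := (kappa / (kappa - pi) * (dh - Q))
      / (Rpower (wfun mu (1 - p) * Rpower pi beta
                 / (wfun mu p * lambda * Rpower (kappa - pi) beta)) (1 / (beta - 1)) - 1) in
  (forall x1 x2, local_max_on U 0 (Q - dl) x1 -> local_max_on U 0 (Q - dl) x2 -> x1 = x2)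
  /\ (G < 1 -> max_on_at U 0 (Q - dl) (Q - dl))
  /\ (1 <= G -> 0 < qstar <= Q - dl /\ max_on_at U 0 (Q - dl) qstar).
Proof.
intros U G qstar.
assert (Hw1 : 0 < wfun mu (1 - p)) by (unfold wfun; apply exp_pos).
assert (Hwp : 0 < wfun mu p) by (unfold wfun; apply exp_pos).
assert (Hpb : 0 < Rpower pi beta) by (unfold Rpower; apply exp_pos).
assert (Hkpb : 0 < Rpower (kappa - pi) beta) by (unfold Rpower; apply exp_pos).
set (A := wfun mu (1 - p) * Rpower pi beta).
set (B := wfun mu p * lambda * Rpower (kappa - pi) beta).
assert (HA : 0 < A) by (unfold A; nra).
assert (HB : 0 < B) by (unfold B; apply Rmult_lt_0_compat; nra).
set (c := kappa / (kappa - pi) * (dh - Q)).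
assert (Hc : 0 < c) by (unfold c; apply Rmult_lt_0_compat; [apply Rdiv_lt_0_compat|]; lra).
set (m := Q - dl).
assert (Hm : 0 < m) by (unfold m; lra).
set (l := 1 / (beta - 1) * ln (A / B)).
assert (El : (beta - 1) * l = ln A - ln B).
{ unfold l. rewrite ln_div by lra. field. lra. }
assert (Hq : qstar = c / (exp l - 1)) by reflexivity.
assert (HUg : forall q, 0 <= q <= m -> U q = gf A B c beta q).
{ intros q Hq0. unfold U, Ufun, gf, vfun, Lfun.
  destruct (Rle_dec 0 (Q - q - dl)) as [_|Hn]; [|unfold m in Hq0; lra].
  destruct (Rle_dec 0 (Q - q - dh)) as [Hn|_]; [lra|].
  destruct (Rle_dec 0 (pi * q + 0 - 0)) as [_|Hn]; [|nra].
  destruct (Rle_dec 0 (pi * q + kappa * (Q - q - dh) - 0)) as [Hn|_]; [nra|].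
  assert (E1 : rpow (pi * q + 0 - 0) beta = Rpower pi beta * rpow q beta).
  { unfold rpow. destruct (Rle_dec q 0).
    - destruct (Rle_dec (pi * q + 0 - 0) 0); [ring|nra].
    - destruct (Rle_dec (pi * q + 0 - 0) 0); [nra|].
      rewrite Rpower_mult_distr by lra. f_equal; ring. }
  assert (E2 : rpow (- (pi * q + kappa * (Q - q - dh) - 0)) beta
               = Rpower (kappa - pi) beta * Rpower (q + c) beta).
  { unfold rpow. destruct (Rle_dec (- (pi * q + kappa * (Q - q - dh) - 0)) 0); [nra|].
    rewrite Rpower_mult_distr by lra. f_equal. unfold c. field. lra. }
  rewrite E1, E2. unfold A, B. ring. }
assert (HG : G = exp ((beta - 1) * (ln (1 + c / m) - l))).
{ unfold G.
  replace (1 + kappa * (dh - Q) / ((kappa - pi) * (Q - dl))) with (1 + c / m)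
    by (unfold c, m; field; lra).
  replace (lambda * Rpower (kappa - pi) beta * wfun mu p / (Rpower pi beta * wfun mu (1 - p)))
    with (B / A) by (unfold A, B; field; lra).
  replace ((beta - 1) * (ln (1 + c / m) - l)) with (ln (B / A) + (beta - 1) * ln (1 + c / m)).
  2:{ rewrite ln_div by lra. lra. }
  rewrite exp_plus, exp_ln by (apply Rdiv_lt_0_compat; lra). reflexivity. }
assert (Hsm : 0 < ln (1 + c / m)).
{ rewrite <- ln_1. apply ln_increasing; [lra|].
  assert (0 < c / m) by (apply Rdiv_lt_0_compat; lra). lra. }
assert (Hmain : exists M, 0 < M <= m /\
   (forall x y, 0 <= x < y -> y <= M -> U x < U y) /\
   (forall x y, M <= x < y -> y <= m -> U y < U x) /\
   (l < ln (1 + c / m) -> M = m) /\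
   (ln (1 + c / m) <= l -> M = c / (exp l - 1))).
{ destruct (Rlt_le_dec l (ln (1 + c / m))) as [Hl|Hl].
  - exists m. split; [lra|]. split; [|split; [intros; lra|split; [auto|intros; lra]]].
    intros x y Hxy Hy. rewrite !HUg by lra.
    apply (gf_incr A B c beta m); try lra.
    intros t Ht. apply (dgf_sign A B c beta t); try lra.
    fold l. destruct (Req_dec t m) as [->|Hne]; [lra|].
    pose proof (s_decr c t m Hc ltac:(lra)). lra.
  - set (M := c / (exp l - 1)).
    assert (Hel : 1 < exp l) by (rewrite <- exp_0; apply exp_increasing; lra).
    assert (HM : 0 < M) by (unfold M; apply Rdiv_lt_0_compat; lra).
    assert (HsM : ln (1 + c / M) = l).
    { replace (1 + c / M) with (exp l) by (unfold M; field; lra). apply ln_exp. }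
    assert (HMm : M <= m).
    { destruct (Rle_lt_dec M m) as [?|Hlt]; auto.
      pose proof (s_decr c m M Hc ltac:(lra)). lra. }
    exists M. split; [lra|]. split; [|split; [|split; [intros; lra|intros; reflexivity]]].
    + intros x y Hxy Hy. rewrite !HUg by lra.
      apply (gf_incr A B c beta M); try lra.
      intros t Ht. apply (dgf_sign A B c beta t); try lra.
      fold l. pose proof (s_decr c t M Hc ltac:(lra)). lra.
    + intros x y Hxy Hy. rewrite !HUg by lra.
      apply (gf_decr A B c beta M m); try lra.
      intros t Ht. apply (dgf_sign A B c beta t); try lra.
      fold l. pose proof (s_decr c M t Hc ltac:(lra)). lra. }
destruct Hmain as [M [HMm [Hi [Hd [H1 H2]]]]].
destruct (unimodal U M m HMm Hi Hd) as [Hmax Huniq].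
split; [|split].
- intros x1 x2 Hx1 Hx2. rewrite (Huniq x1 Hx1), (Huniq x2 Hx2). reflexivity.
- intros HG0. rewrite HG in HG0.
  assert (HG1 : (beta - 1) * (ln (1 + c / m) - l) < 0).
  { apply exp_lt_inv. rewrite exp_0. exact HG0. }
  assert (l < ln (1 + c / m)).
  { destruct (Rlt_le_dec l (ln (1 + c / m))) as [?|Hle]; auto.
    assert (0 <= (1 - beta) * (l - ln (1 + c / m))) by (apply Rmult_le_pos; lra).
    assert (Eq : (1 - beta) * (l - ln (1 + c / m)) = (beta - 1) * (ln (1 + c / m) - l)) by ring.
    lra. }
  rewrite (H1 H) in Hmax. exact Hmax.
- intros HG1. rewrite HG in HG1.
  assert (ln (1 + c / m) <= l).
  { destruct (Rle_lt_dec (ln (1 + c / m)) l) as [?|Hlt]; auto.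
    assert (0 < (1 - beta) * (ln (1 + c / m) - l)).
    { apply Rmult_lt_0_compat; lra. }
    assert (Eq : (1 - beta) * (ln (1 + c / m) - l) = - ((beta - 1) * (ln (1 + c / m) - l))) by ring.
    assert (Hlt2 : (beta - 1) * (ln (1 + c / m) - l) < 0) by lra.
    apply exp_increasing in Hlt2. rewrite exp_0 in Hlt2. lra. }
  rewrite Hq. rewrite (H2 H) in Hmax, HMm. split; [lra|exact Hmax].
Qed.
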